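(* Let $w$ be a weight on $\mathbb{N}_0$ satisfying the discrete Pearson equation $\theta(k+1)w(k+1)=\sigma(k)w(k)$ for all $k\in\mathbb{N}_0$, with $\theta,\sigma$ polynomials and $\theta(0)=0$, and with the setting of the context. Then for all $z\in\mathbb{C}\setminus\mathbb{Z}$, $$\theta(z)Q(z)-\Psi^\top H^{-1}Q(z-1)=\sum_{k=0}^\infty P(k)\frac{\theta(z)-\theta(k)}{z-k}w(k),$$ $$\sigma(z)Q(z)-\Psi H^{-1}Q(z+1)=\sum_{k=0}^\infty P(k)\frac{\sigma(z)-\sigma(k)}{z-k}w(k).$$
   Context: The weight $w$ takes values $w(k)$ at $k\in\mathbb{N}_0$ with $\sum_kk^n|w(k)|<\infty$ for all $n$; moments $\rho_n=\sum_kk^nw(k)$, moment matrix $G=(\rho_{n+m})_{n,m\ge0}$ with all leading principal minors nonzero, so $G=S^{-1}HS^{-\top}$ with $S$ lower unitriangular and $H=\operatorname{diag}(H_0,H_1,\dots)$. $P(z)=S\chi(z)$, $\chi(z)=(1,z,z^2,\dots)^\top$, is the vector of monic orthogonal polynomials $P_n$ (with $\sum_kP_n(k)P_m(k)w(k)=\delta_{n,m}H_n$), and $Q(z)$ is the vector of second kind functions $Q_n(z)=\sum_{k=0}^\infty\frac{P_n(k)w(k)}{z-k}$. $\Lambda$ is the shift matrix (ones on the first superdiagonal), $J=S\Lambda S^{-1}$ the Jacobi matrix, $B$ the lower Pascal matrix $B_{n,m}=\binom nm$, $\Pi:=SBS^{-1}$ (so $P(z+1)=\Pi P(z)$). The Laguerre--Freud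 structure matrix is $\Psi:=\Pi^{-1}\theta(J)H$; under the Pearson equation it is known that also $\Psi=H\sigma(J^\top)\Pi^\top$, and $\Psi$ is banded. *)

(* Defs.v *)
(* Complex numbers: C R := (R[i])^o for
   R : realType (the ^o copy carries the normed/topological structure so that
   series and limits make sense). *)
From mathcomp Require Import all_boot all_order all_algebra.
From mathcomp Require Import all_classical all_reals all_analysis.
From mathcomp Require Import complex.
Import Order.TTheory GRing.Theory Num.Theory numFieldNormedType.Exports.

Set Implicit Arguments.
Unset Strict Implicit.
Unset Printing Implicit Defensive.

Local Open Scope ring_scope.

Notation C R := ((R[i])^o).

Section Defs.
Variable R : realType.

Definition mx := nat -> nat -> C R.
Definition vc := nat -> C R.

Definition csum (u : nat -> C R) : C R := limn (series u).

Definition mmul (A B : mx) : mx := fun n m => csum (fun k => A n k * B k m).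
Definition mvmul (A : mx) (v : vc) : vc := fun n => csum (fun k => A n k * v k).
Definition mtr (A : mx) : mx := fun n m => A m n.
Definition idm : mx := fun n m => (n == m)%:R.
Definition diagm (d : nat -> C R) : mx := fun n m => if n == m then d n else 0.
Definition shiftm : mx := fun n m => (m == n.+1)%:R.
Definition pascal : mx := fun n m => ('C(n, m))%:R.
Definition mpow (A : mx) (i : nat) : mx := iter i (mmul A) idm.
Definition mhorner (p : {poly C R}) (A : mx) : mx :=
  fun n m => \sum_(i < size p) p`_i * mpow A i n m.
(* inverse of a lower triangular infinite matrix (with invertible diagonal):
   its entries are those of the inverse of any finite leading truncation
   containing them *)
Definition lowinv (A : mx) : mx := fun n m =>
  let N := (maxn n m).+1 in
  (invmx (\matrix_(i < N, j < N) A i j)) (inord n) (inord m).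

Definition chi (z : C R) : vc := fun k => z ^+ k.

Section Weight.
Variables (w : nat -> C R) (S : mx) (Hd : nat -> C R).

Definition moment (n : nat) : C R := csum (fun k => (k%:R) ^+ n * w k).
Definition momentmx : mx := fun n m => moment (n + m).

Definition Pvec (z : C R) : vc := mvmul S (chi z).
Definition Qvec (z : C R) : vc :=
  fun n => csum (fun k => Pvec k%:R n * w k / (z - k%:R)).

Definition Hmx : mx := diagm Hd.
Definition Hinvmx : mx := diagm (fun n => (Hd n)^-1).
Definition Jacobi : mx := mmul (mmul S shiftm) (lowinv S).
Definition Pimx : mx := mmul (mmul S pascal) (lowinv S).
Definition Psi (theta : {poly C R}) : mx :=
  mmul (mmul (lowinv Pimx) (mhorner theta Jacobi)) Hmx.

End Weight.
End Defs.

(* Main.v *)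
Require Import Defs.
From mathcomp Require Import all_boot all_order all_algebra.
From mathcomp Require Import all_classical all_reals all_analysis.
From mathcomp Require Import complex.
From mathcomp Require Import ring.
Import Order.TTheory GRing.Theory Num.Theory numFieldNormedType.Exports.
Local Open Scope classical_set_scope.
Local Open Scope ring_scope.

Section Ana.
Variable R : realType.
Local Notation K := (C R).

Lemma csum_fin (u : nat -> K) N : (forall k, (N <= k)%N -> u k = 0) ->
  cvgn (series u) /\ csum u = \sum_(k < N) u k.
Proof.
move=> h.
have cv : series u @ \oo --> \sum_(k<N) u k.
  apply: cvg_near_cst; exists N => // n /= Nn.
  rewrite seriesEord /= -(subnKC Nn) big_split_ord /= [X in _ + X]big1 ?addr0 // => i _.
  by apply: h; apply: leq_addr.
by split; [exact: cvgP cv | exact: cvg_lim cv].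
Qed.

Lemma normc_Re (x : K) : (`|complex.Re x|)%:C%C <= `|x|.
Proof.
rewrite normc_def lecR -sqrtr_sqr ler_sqrt; last by rewrite addr_ge0 // sqr_ge0.
by rewrite lerDl sqr_ge0.
Qed.

Lemma normc_Im (x : K) : (`|complex.Im x|)%:C%C <= `|x|.
Proof.
rewrite normc_def lecR -sqrtr_sqr ler_sqrt; last by rewrite addr_ge0 // sqr_ge0.
by rewrite lerDr sqr_ge0.
Qed.

Lemma normc_le (x : K) : `|x| <= (`|complex.Re x| + `|complex.Im x|)%:C%C.
Proof.
rewrite normc_def lecR.
rewrite -[X in _ <= X]ger0_norm ?addr_ge0 // -sqrtr_sqr ler_sqrt ?sqr_ge0 //.
rewrite sqrrD !real_normK ?num_real // -addrA lerD2l lerDr mulrn_wge0 // mulr_ge0.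

Qed.

Lemma cvg_Re (u : nat -> K) (l : K) : u @ \oo --> l ->
  (fun n => complex.Re (u n)) @ \oo --> complex.Re l.
Proof.
move=> /cvgrPdist_lt h; apply/cvgrPdist_lt => e e0.
have e0' : (0 : K) < e%:C%C by rewrite ltcR.
apply: filterS (h _ e0') => n /= hn.
rewrite -ltcR; apply: le_lt_trans hn; rewrite -raddfB /=; exact: normc_Re.
Qed.

Lemma cvg_Im (u : nat -> K) (l : K) : u @ \oo --> l ->
  (fun n => complex.Im (u n)) @ \oo --> complex.Im l.
Proof.
move=> /cvgrPdist_lt h; apply/cvgrPdist_lt => e e0.
have e0' : (0 : K) < e%:C%C by rewrite ltcR.
apply: filterS (h _ e0') => n /= hn.
rewrite -ltcR; apply: le_lt_trans hn; rewrite -raddfB /=; exact: normc_Im.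
Qed.

Lemma cvg_ReIm (u : nat -> K) (a b : R) :
  (fun n => complex.Re (u n)) @ \oo --> a ->
  (fun n => complex.Im (u n)) @ \oo --> b ->
  u @ \oo --> ((a +i* b)%C : K).
Proof.
move=> /cvgrPdist_lt ha /cvgrPdist_lt hb; apply/cvgrPdist_lt => e e0.
move: (e0); rewrite ltcE /= => /andP[/eqP Ime Ree].
have e2 : 0 < complex.Re e / 2 by rewrite divr_gt0.
have -> : e = (complex.Re e)%:C%C by case: e e0 Ime Ree {e2} => ? ? /= _ ->.
near=> n.
apply: (le_lt_trans (normc_le _)).
rewrite ltcR [X in _ < X](splitr (complex.Re e)).
rewrite raddfB /= raddfB /=.
apply: ltrD; [near: n; exact: ha | near: n; exact: hb].
Unshelve. all: by end_near.
Qed.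


Lemma series_evq {K0 : numFieldType} {V : normedModType K0} (u v : nat -> V) N :
  (forall k, (N <= k)%N -> u k = v k) -> cvgn (series u) -> cvgn (series v).
Proof.
move=> h /cvg_ex[l hl]; apply/cvg_ex; exists (l + (series v N - series u N)).
rewrite -(cvg_shiftn N).
have e n : series v (n + N)%N = series u (n + N)%N + (series v N - series u N).
  rewrite !series_addn.
  rewrite (@eq_big_nat _ _ _ N (n + N) _ u); last first.
    by move=> k /andP[Nk _]; rewrite h.
  by rewrite [RHS]addrC addrA subrK.
have -> : (fun n => series v (n + N)%N) = (fun n => series u (n + N)%N + (series v N - series u N)).
  by apply: funext => m; rewrite e.
apply: cvgD; last exact: cvg_cst.
by rewrite cvg_shiftn.
Qed.

Lemma rcmp (a b : nat -> R) N : cvgn (series b) ->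
  (forall k, (N <= k)%N -> `|a k| <= b k) -> cvgn (series a).
Proof.
move=> cb h.
pose a' k := if (N <= k)%N then a k else 0.
pose b' k := if (N <= k)%N then b k else 0.
have cb' : cvgn (series b').
  by apply: (@series_evq _ _ b b' N) => // k Nk; rewrite /b' Nk.
suff : cvgn (series a') by apply: (@series_evq _ _ a' a N) => k Nk; rewrite /a' Nk.
apply: (@normed_cvg R R); apply: (@series_le_cvg R (fun n => `|a' n|) b') => //.
- move=> k; rewrite /b'; case: ifP => // Nk; exact: le_trans (normr_ge0 _) (h k Nk).
- move=> k; rewrite /a' /b'; case: ifP => Nk; [exact: h k Nk | by rewrite normr0].
Qed.

Lemma series_Re (v : nat -> K) :
  series (fun k => complex.Re (v k)) = (fun n => complex.Re (series v n)).
Proof. by apply: funext => n; rewrite /series /= raddf_sum. Qed.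

Lemma series_Im (v : nat -> K) :
  series (fun k => complex.Im (v k)) = (fun n => complex.Im (series v n)).
Proof. by apply: funext => n; rewrite /series /= raddf_sum. Qed.

Lemma cmp_cvg (u v : nat -> K) N : cvgn (series v) ->
  (forall k, (N <= k)%N -> `|u k| <= v k) -> cvgn (series u).
Proof.
move=> /cvg_ex[l hl] h.
have hR : cvgn (series (fun k => complex.Re (v k))).
  by apply/cvg_ex; exists (complex.Re l); rewrite series_Re; exact: cvg_Re.
have key k : (N <= k)%N ->
    `|complex.Re (u k)| <= complex.Re (v k) /\ `|complex.Im (u k)| <= complex.Re (v k).
  move=> Nk; have hk := h k Nk.
  have v0 : 0 <= v k by exact: le_trans (normr_ge0 _) hk.
  have ev : v k = (complex.Re (v k))%:C%C.
    by move: v0; case: (v k) => a b /ger0_Im /= ->.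
  by split; rewrite -lecR -ev; [exact: le_trans (normc_Re _) hk|exact: le_trans (normc_Im _) hk].
have /cvg_ex[A hA] : cvgn (series (fun k => complex.Re (u k))).
  by apply: (@rcmp _ _ N hR) => k /key[].
have /cvg_ex[B hB] : cvgn (series (fun k => complex.Im (u k))).
  by apply: (@rcmp _ _ N hR) => k /key[].
apply/cvg_ex; exists ((A +i* B)%C : K); apply: cvg_ReIm.
- by rewrite -series_Re.
- by rewrite -series_Im.
Qed.


Definition summ (u : nat -> K) := cvgn (series u).

Lemma summD (u v : nat -> K) : summ u -> summ v ->
  summ (fun k => u k + v k) /\ csum (fun k => u k + v k) = csum u + csum v.
Proof.
move=> hu hv; split; first exact: (is_cvg_seriesD hu hv).
exact: (lim_seriesD hu hv).
Qed.

Lemma summZ c (u : nat -> K) : summ u ->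
  summ (fun k => c * u k) /\ csum (fun k => c * u k) = c * csum u.
Proof.
move=> hu; split; first exact: (@is_cvg_seriesZ K u c hu).
exact: (@lim_seriesZ K u c hu).
Qed.

Lemma summ_sum n (F : nat -> nat -> K) : (forall i, (i < n)%N -> summ (F i)) ->
  summ (fun k => \sum_(i < n) F i k) /\ csum (fun k => \sum_(i < n) F i k) = \sum_(i < n) csum (F i).
Proof.
elim: n => [|n IH] h.
  have := @csum_fin (fun k => \sum_(i < 0) F i k) 0 (fun k _ => big_ord0 _ _ _ _).
  by rewrite !big_ord0.
have [h1 h2] := IH (fun i hi => h i (ltnW hi)).
have [h3 h4] := @summD _ _ h1 (h n (ltnSn n)).
have -> : (fun k => \sum_(i < n.+1) F i k) = (fun k => \sum_(i < n) F i k + F n k).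
  by apply: funext => k; rewrite big_ord_recr.
by rewrite big_ord_recr /= h4 h2.
Qed.

Lemma csum_lin D (c : nat -> K) (F : nat -> nat -> K) :
  (forall k, (k < D)%N -> summ (F k)) ->
  summ (fun i => \sum_(k < D) c k * F k i) /\
  csum (fun i => \sum_(k < D) c k * F k i) = \sum_(k < D) c k * csum (F k).
Proof.
move=> h.
have [h1 h2] := @summ_sum D (fun k i => c k * F k i) (fun k hk => (summZ (c k) (F k) (h k hk)).1).
split=> //; rewrite h2; apply: eq_bigr => k _.
exact: (summZ (c k) (F k) (h k (ltn_ord k))).2.
Qed.

Lemma csumB (u v : nat -> K) : summ u -> summ v ->
  csum (fun k => u k - v k) = csum u - csum v.
Proof.
move=> hu hv.
have e : (fun k => u k - v k) = (fun k => u k + (-1) * v k).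
  by apply: funext => k; rewrite mulN1r.
rewrite e; have [_ ->] := @summD u _ hu (summZ (-1) v hv).1.
by rewrite (summZ (-1) v hv).2 mulN1r.
Qed.

Lemma summB (u v : nat -> K) : summ u -> summ v -> summ (fun k => u k - v k).
Proof.
move=> hu hv.
have e : (fun k => u k - v k) = (fun k => u k + (-1) * v k).
  by apply: funext => k; rewrite mulN1r.
by rewrite e; exact: (@summD u _ hu (summZ (-1) v hv).1).1.
Qed.

Lemma summ_shift (u : nat -> K) : summ (fun k => u k.+1) ->
  summ u /\ csum u = u 0%N + csum (fun k => u k.+1).
Proof.
move=> /cvg_ex[l hl].
have e n : series u n.+1 = u 0%N + series (fun k => u k.+1) n.
  by rewrite /series /= big_nat_recl.
have hu : series u @ \oo --> u 0%N + l.
  rewrite -cvg_shiftS.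
  have -> : (fun n => series u n.+1) = (fun n => u 0%N + series (fun k => u k.+1) n).
    by apply: funext => m; rewrite e.
  by apply: cvgD; [exact: cvg_cst | exact: hl].
split; first exact: (cvgP _ hu).
by rewrite /csum (cvg_lim _ hu) // (cvg_lim _ hl).
Qed.

Lemma summ_shift' (u : nat -> K) : summ u -> summ (fun k => u k.+1).
Proof.
move=> /cvg_ex[l hl]; apply/cvg_ex; exists (l - u 0%N).
have e n : series (fun k => u k.+1) n = series u n.+1 - u 0%N.
  by rewrite /series /= big_nat_recl // addrC addKr.
have -> : series (fun k => u k.+1) = (fun n => series u n.+1 - u 0%N).
  by apply: funext => m; rewrite e.
by apply: cvgB; [rewrite cvg_shiftS | exact: cvg_cst].
Qed.


Lemma real_of_ge0 (x : K) : 0 <= x -> x = (complex.Re x)%:C%C.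
Proof. by case: x => a b /ger0_Im /= ->. Qed.

Lemma ev_inv (c : K) : exists N0, forall k, (N0 <= k)%N -> `|(c - k%:R)^-1| <= 1.
Proof.
set r := complex.Re `|c|.
have ec : `|c| = r%:C%C by apply: real_of_ge0.
have r0 : 0 <= `|r| + 1 by rewrite addr_ge0.
exists (Num.bound (`|r| + 1)) => k hk.
have hb := archi_boundP r0.
have h1 : 1 <= `|c - k%:R|.
  rewrite distrC; apply: le_trans (lerB_dist _ _).
  rewrite normr_nat ec lerBrDr.
  have -> : (k%:R : K) = (k%:R : R)%:C%C by rewrite rmorph_nat.
  rewrite -[1 : K]/((1 : R)%:C%C) -rmorphD /= lecR.
  apply: (@le_trans _ _ (`|r| + 1)); first by rewrite addrC lerD2r ler_norm.
  by apply: le_trans (ltW hb) _; rewrite ler_nat.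
rewrite normfV invf_le1 //; exact: lt_le_trans ltr01 h1.
Qed.


Section W.
Variable w : nat -> K.
Hypothesis hsum : forall n : nat, cvgn (series (fun k : nat => (k%:R ^+ n * `|w k|) : K)).

Lemma base_cvg m (g : nat -> K) N0 : (forall k, (N0 <= k)%N -> `|g k| <= 1) ->
  summ (fun k => (k%:R)^+m * w k * g k).
Proof.
move=> hg; apply: (@cmp_cvg _ _ N0 (hsum m)) => k hk.
rewrite !normrM normrX normr_nat -[X in _ <= X]mulr1.
by apply: ler_wpM2l; [rewrite mulr_ge0 // exprn_ge0 | exact: hg].
Qed.

Lemma poly_cvg (q : {poly K}) (g : nat -> K) N0 :
  (forall k, (N0 <= k)%N -> `|g k| <= 1) ->
  summ (fun k => q.[k%:R] * w k * g k).
Proof.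
move=> hg.
have -> : (fun k => q.[k%:R] * w k * g k) =
    (fun k => \sum_(i < size q) q`_i * ((k%:R)^+i * w k * g k)).
  apply: funext => k; rewrite horner_coef !mulr_suml.
  by apply: eq_bigr => i _; rewrite !mulrA.
apply: (proj1 (@summ_sum (size q) (fun i k => q`_i * ((k%:R)^+i * w k * g k)) _)) => i _.
exact: (@summZ q`_i _ (base_cvg i g N0 hg)).1.
Qed.

Lemma poly_cvg1 (q : {poly K}) : summ (fun k => q.[k%:R] * w k).
Proof.
have h1 : forall k, (0 <= k)%N -> `|(1 : K)| <= 1 by move=> k _; rewrite normr1.
have := @poly_cvg q (fun _ => 1) 0 h1.
have -> // : (fun k => q.[k%:R] * w k * 1) = (fun k => q.[k%:R] * w k).
  by apply: funext => k; rewrite mulr1.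
Qed.

Lemma poly_cvgz (q : {poly K}) (c : K) :
  summ (fun k => q.[k%:R] * w k / (c - k%:R)).
Proof.
have [N0 hN] := ev_inv c; exact: (poly_cvg q _ N0 hN).
Qed.

End W.

End Ana.
Arguments summ {R} u.

Set Implicit Arguments.
Unset Strict Implicit.

Section Mat.
Variable R : realType.
Local Notation K := (C R).
Local Notation mx := (mx R).

Definition rowfin (A : mx) b := forall n m, (n + b < m)%N -> A n m = 0.

Lemma rowfinW (A : mx) a b : rowfin A a -> (a <= b)%N -> rowfin A b.
Proof. by move=> h ab n m hm; apply: h; apply: leq_ltn_trans hm; rewrite leq_add2l. Qed.

Lemma sum_trunc (F : nat -> K) M N : (M <= N)%N ->
  (forall k, (M <= k)%N -> (k < N)%N -> F k = 0) ->
  \sum_(k < N) F k = \sum_(k < M) F k.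
Proof.
move=> MN h; rewrite -(subnKC MN) big_split_ord /= [X in _ + X]big1 ?addr0 //.
move=> k _; apply: h; first exact: leq_addr.
by rewrite -ltn_subRL.
Qed.

Lemma sum_delta (f : nat -> K) n N : (n < N)%N ->
  \sum_(k < N) (n == k :> nat)%:R * f k = f n.
Proof.
move=> hn; rewrite (bigD1 (Ordinal hn)) //= eqxx mul1r big1 ?addr0 //.
move=> k hk; case: eqP => [e|]; last by rewrite mul0r.
by move: hk; rewrite -val_eqE /= e eqxx.
Qed.

Lemma sum_delta' (f : nat -> K) n N : (n < N)%N ->
  \sum_(k < N) f k * (k == n :> nat)%:R = f n.
Proof.
move=> hn; rewrite -(@sum_delta f n N hn); apply: eq_bigr => k _.
by rewrite mulrC eq_sym.
Qed.

Lemma mmul_fin (A B : mx) a N n m : rowfin A a -> (n + a < N)%N ->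
  mmul A B n m = \sum_(k < N) A n k * B k m.
Proof.
move=> hA hN; rewrite /mmul; apply: (proj2 (@csum_fin _ (fun k => A n k * B k m) N _)).
by move=> k hk; rewrite hA ?mul0r //; exact: leq_trans hN hk.
Qed.

Lemma mvmul_fin (A : mx) (v : vc R) a N n : rowfin A a -> (n + a < N)%N ->
  mvmul A v n = \sum_(k < N) A n k * v k.
Proof.
move=> hA hN; rewrite /mvmul; apply: (proj2 (@csum_fin _ (fun k => A n k * v k) N _)).
by move=> k hk; rewrite hA ?mul0r //; exact: leq_trans hN hk.
Qed.

Lemma rowfin_mmul (A B : mx) a b : rowfin A a -> rowfin B b -> rowfin (mmul A B) (a + b).
Proof.
move=> hA hB n m hm; rewrite (@mmul_fin A B a (n + a).+1) //.
apply: big1 => k _; rewrite hB ?mulr0 //.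
apply: leq_ltn_trans hm; rewrite addnA leq_add2r -ltnS; exact: ltn_ord.
Qed.

Lemma mvmul_mmul (A B : mx) a b (v : vc R) n : rowfin A a -> rowfin B b ->
  mvmul (mmul A B) v n = mvmul A (mvmul B v) n.
Proof.
move=> hA hB; set N := (n + a + b).+1.
have hAB := rowfin_mmul hA hB.
rewrite (@mvmul_fin _ _ (a + b) N) ?addnA //.
rewrite (@mvmul_fin _ _ a N) ?ltnS ?leq_addr //.
under eq_bigr => k _ do rewrite (@mmul_fin A B a N) ?ltnS ?leq_addr // mulr_suml.
rewrite exchange_big /=; apply: eq_bigr => j _.
have [hj|hj] := leqP j (n + a).
  rewrite (@mvmul_fin B v b N j hB); last by rewrite ltnS leq_add2r.
  by rewrite mulr_sumr; apply: eq_bigr => k _; rewrite mulrA.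
by rewrite hA // mul0r big1 // => k _; rewrite !mul0r.
Qed.

Lemma rowfin_idm : rowfin (@idm R) 0.
Proof. by move=> n m; rewrite addn0 /idm => /ltn_eqF ->. Qed.

Lemma mvmul_idm (v : vc R) n : mvmul (@idm R) v n = v n.
Proof. by rewrite (@mvmul_fin _ v 0 n.+1 n rowfin_idm) ?addn0 // /idm sum_delta. Qed.

Lemma mvmulZ (A : mx) a (v : vc R) c n : rowfin A a ->
  mvmul A (fun k => c * v k) n = c * mvmul A v n.
Proof.
move=> hA; rewrite !(@mvmul_fin _ _ a (n + a).+1) // mulr_sumr.
by apply: eq_bigr => k _; rewrite mulrCA.
Qed.

Lemma rowfin_mpow (A : mx) i : rowfin A 1 -> rowfin (mpow A i) i.
Proof.
move=> hA; elim: i => [|i IH]; first exact: rowfin_idm.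
by rewrite /mpow iterS -/(mpow A i) -add1n; apply: rowfin_mmul.
Qed.

Lemma rowfin_mhorner (p : {poly K}) (A : mx) : rowfin A 1 -> rowfin (mhorner p A) (size p).
Proof.
move=> hA n m hm; rewrite /mhorner big1 // => i _.
rewrite (@rowfin_mpow A i hA) ?mulr0 //.
apply: leq_ltn_trans hm; rewrite leq_add2l; exact: ltnW.
Qed.

Lemma mvmul_mhorner (p : {poly K}) (A : mx) (v : vc R) n : rowfin A 1 ->
  mvmul (mhorner p A) v n = \sum_(i < size p) p`_i * mvmul (mpow A i) v n.
Proof.
move=> hA; set N := (n + size p).+1.
rewrite (@mvmul_fin _ _ (size p) N) //; last exact: rowfin_mhorner.
rewrite /mhorner; under eq_bigr => k _ do rewrite mulr_suml.
rewrite exchange_big /=; apply: eq_bigr => i _.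
rewrite (@mvmul_fin _ _ i N); last by rewrite ltnS leq_add2l ltnW.
  by rewrite mulr_sumr; apply: eq_bigr => k _; rewrite mulrA.
exact: rowfin_mpow.
Qed.

Lemma eigen_mhorner (p : {poly K}) (A : mx) (v : vc R) (x : K) : rowfin A 1 ->
  (forall n, mvmul A v n = x * v n) ->
  forall n, mvmul (mhorner p A) v n = p.[x] * v n.
Proof.
move=> hA hv.
have hp i n : mvmul (mpow A i) v n = x ^+ i * v n.
  elim: i n => [|i IH] n; first by rewrite mvmul_idm expr0 mul1r.
  rewrite /mpow iterS -/(mpow A i) (mvmul_mmul _ _ hA (@rowfin_mpow A i hA)).
  have -> : mvmul (mpow A i) v = (fun k => x ^+ i * v k) by apply: funext => k; exact: IH.
  by rewrite (mvmulZ _ _ _ hA) hv exprS mulrCA !mulrA.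
move=> n; rewrite mvmul_mhorner // horner_coef mulr_suml.
by apply: eq_bigr => i _; rewrite hp mulrA.
Qed.


Definition trunc N (A : mx) : 'M[K]_N := \matrix_(i < N, j < N) A i j.
Definition lunit (A : mx) := rowfin A 0 /\ forall n, A n n = 1.

Lemma trunc_unit N A : lunit A -> trunc N A \in unitmx.
Proof.
move=> [h0 h1]; rewrite unitmxE det_trig.
  by rewrite big1 ?unitr1 // => i _; rewrite mxE h1.
by apply/is_trig_mxP => i j ij; rewrite mxE h0 // addn0.
Qed.

Lemma lowinv_trunc A N n m : lunit A -> (n < N.+1)%N -> (m < N.+1)%N ->
  lowinv A n m = invmx (trunc N.+1 A) (inord n) (inord m).
Proof.
move=> hA hn hm; set M := (maxn n m).+1.
have MN : (M <= N.+1)%N by rewrite /M gtn_max hn hm.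
set X := invmx (trunc N.+1 A).
pose Y : 'M[K]_M := \matrix_(i < M, j < M) X (widen_ord MN i) (widen_ord MN j).
have TY : trunc M A *m Y = 1%:M.
  apply/matrixP => i j.
  rewrite mxE [RHS]mxE.
  have e1 : trunc N.+1 A *m X = 1%:M by exact: mulmxV (trunc_unit N.+1 hA).
  have e2 := congr1 (fun Z : matrix K N.+1 N.+1 => Z (widen_ord MN i) (widen_ord MN j)) e1.
  simpl in e2; rewrite mxE [in RHS]mxE in e2.
  have -> : (i == j) = (widen_ord MN i == widen_ord MN j) by rewrite -val_eqE.
  rewrite -e2.
  transitivity (\sum_(k < N.+1) A i k * X (inord k) (widen_ord MN j)).
    symmetry; rewrite (@sum_trunc (fun k => A i k * X (inord k) (widen_ord MN j)) M N.+1 MN).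
      apply: eq_bigr => k _; rewrite !mxE; congr (_ * _).
      by congr (X _ _); apply: val_inj; rewrite /= inordK // (leq_trans (ltn_ord k) MN).
    move=> k Mk kN; rewrite (proj1 hA) ?mul0r // addn0.
    exact: leq_trans (ltn_ord i) Mk.
  by apply: eq_bigr => k _; rewrite !mxE inord_val.
have eY : invmx (trunc M A) = Y.
  by have := mulKmx (trunc_unit M hA) Y; rewrite TY mulmx1.
rewrite /lowinv -/M -/(trunc M A) eY mxE.
have hn' : (n < M)%N by rewrite /M ltnS leq_maxl.
have hm' : (m < M)%N by rewrite /M ltnS leq_maxr.
by congr (X _ _); apply: val_inj; rewrite /= !inordK.
Qed.

Lemma lowinv_r A N n m : lunit A -> (n < N.+1)%N -> (m < N.+1)%N ->
  \sum_(k < N.+1) A n k * lowinv A k m = (n == m)%:R.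
Proof.
move=> hA hn hm.
have e := congr1 (fun Z : matrix K N.+1 N.+1 => Z (inord n) (inord m)) (mulmxV (trunc_unit N.+1 hA)).
simpl in e; rewrite !mxE in e.
have -> : (n == m) = (inord n == inord m :> 'I_(N.+1)) by rewrite -val_eqE /= !inordK.
rewrite -e; apply: eq_bigr => k _.
by rewrite mxE inordK // (lowinv_trunc hA (ltn_ord k) hm) inord_val.
Qed.

Lemma lowinv_l A N n m : lunit A -> (n < N.+1)%N -> (m < N.+1)%N ->
  \sum_(k < N.+1) lowinv A n k * A k m = (n == m)%:R.
Proof.
move=> hA hn hm.
have e := congr1 (fun Z : matrix K N.+1 N.+1 => Z (inord n) (inord m)) (mulVmx (trunc_unit N.+1 hA)).
simpl in e; rewrite !mxE in e.
have -> : (n == m) = (inord n == inord m :> 'I_(N.+1)) by rewrite -val_eqE /= !inordK.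
rewrite -e; apply: eq_bigr => k _.
by rewrite [X in _ = _ * X]mxE inordK // (lowinv_trunc hA hn (ltn_ord k)) inord_val.
Qed.

Lemma rowfin_lowinv A : lunit A -> rowfin (lowinv A) 0.
Proof.
move=> hA n m; rewrite addn0.
elim/ltn_ind: n => n IH nm.
have := @lowinv_r A m n m hA (ltnW nm) (ltnSn m).
rewrite (ltn_eqF nm) (@sum_trunc (fun k => A n k * lowinv A k m) n.+1 m.+1 (leqW nm)); last first.
  move=> k nk _; rewrite (proj1 hA) ?mul0r // addn0; exact: nk.
rewrite big_ord_recr /= big1 ?add0r ?(proj2 hA) ?mul1r // => k _.
rewrite IH ?mulr0 //; exact: ltn_trans (ltn_ord k) nm.
Qed.

Lemma lowinv_diag A n : lunit A -> lowinv A n n = 1.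
Proof.
move=> hA; have := @lowinv_r A n n n hA (ltnSn n) (ltnSn n).
rewrite eqxx big_ord_recr /= big1 ?add0r ?(proj2 hA) ?mul1r // => k _.
by rewrite (rowfin_lowinv hA) ?mulr0 // addn0.
Qed.

Lemma lunit_lowinv A : lunit A -> lunit (lowinv A).
Proof. by move=> hA; split; [exact: rowfin_lowinv | move=> n; exact: lowinv_diag]. Qed.

Lemma mmul_lowinv_l A n m : lunit A -> mmul (lowinv A) A n m = (n == m)%:R.
Proof.
move=> hA; rewrite (@mmul_fin (lowinv A) A 0 (maxn n m).+1 n m (rowfin_lowinv hA)).
  by apply: (@lowinv_l A (maxn n m)); rewrite // ltnS ?leq_maxl ?leq_maxr.
by rewrite addn0 ltnS leq_maxl.
Qed.

Lemma mmul_lowinv_r A n m : lunit A -> mmul A (lowinv A) n m = (n == m)%:R.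
Proof.
move=> hA; rewrite (@mmul_fin A (lowinv A) 0 (maxn n m).+1 n m (proj1 hA)).
  by apply: (@lowinv_r A (maxn n m)); rewrite // ltnS ?leq_maxl ?leq_maxr.
by rewrite addn0 ltnS leq_maxl.
Qed.

End Mat.

Section Str.
Variable R : realType.
Local Notation K := (C R).
Local Notation mx := (mx R).
Variable S : mx.
Hypothesis hSdiag : forall n : nat, S n n = 1.
Hypothesis hSlow : forall n m : nat, (n < m)%N -> S n m = 0.

Lemma hS : lunit S.
Proof. by split=> // n m; rewrite addn0; exact: hSlow. Qed.

Local Notation Sinv := (lowinv S).
Local Notation P := (Pvec S).

Lemma Pvec_fin x n N : (n < N)%N -> P x n = \sum_(k < N) S n k * x ^+ k.
Proof. by move=> hn; rewrite /Pvec (@mvmul_fin _ S (chi x) 0 N n (proj1 hS)) ?addn0. Qed.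

Lemma chi_exp x m N : (m <= N)%N -> \sum_(k < N.+1) Sinv m k * P x k = x ^+ m.
Proof.
move=> hm.
under eq_bigr => k _ do rewrite (@Pvec_fin x k N.+1 (ltn_ord k)) mulr_sumr.
rewrite exchange_big /=.
transitivity (\sum_(j < N.+1) (m == j :> nat)%:R * x ^+ j); last by rewrite sum_delta.
apply: eq_bigr => j _.
rewrite -(@lowinv_l _ S N m j hS hm (ltn_ord j)) mulr_suml.
by apply: eq_bigr => k _; rewrite mulrA.
Qed.

Definition pP n : {poly K} := \poly_(k < n.+1) S n k.

Lemma pPE n x : (pP n).[x] = P x n.
Proof. by rewrite horner_poly (@Pvec_fin x n n.+1). Qed.

Lemma size_pP n : (size (pP n) <= n.+1)%N.
Proof. exact: size_poly. Qed.

Lemma mmul_diag (A : mx) d n m : mmul A (diagm d) n m = A n m * d m.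
Proof.
rewrite /mmul (proj2 (@csum_fin _ (fun k => A n k * diagm d k m) m.+1 _)).
  rewrite big_ord_recr /= big1 ?add0r; first by rewrite /diagm eqxx.
  by move=> k _; rewrite /diagm (ltn_eqF (ltn_ord k)) mulr0.
by move=> k hk; rewrite /diagm (gtn_eqF hk) mulr0.
Qed.

Lemma mmul_diagn (A B : mx) n : rowfin A 0 -> rowfin B 0 -> mmul A B n n = A n n * B n n.
Proof.
move=> hA hB; rewrite (@mmul_fin _ A B 0 n.+1) ?addn0 //.
rewrite big_ord_recr /= big1 ?add0r // => k _.
by rewrite hB ?mulr0 // addn0.
Qed.

Lemma mvmul_eqidm (A : mx) (v : vc R) n : (forall n m, A n m = (n == m)%:R) ->
  mvmul A v n = v n.
Proof.
move=> h; have -> : A = @idm R by apply: funext => i; apply: funext => j; rewrite h.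
exact: mvmul_idm.
Qed.

Local Notation J := (Jacobi S).

Lemma rowfin_shift : rowfin (@shiftm R) 1.
Proof. by move=> n m; rewrite addn1 /shiftm => /gtn_eqF ->. Qed.

Lemma rowfin_J : rowfin J 1.
Proof.
have h := rowfin_mmul (rowfin_mmul (proj1 hS) rowfin_shift) (rowfin_lowinv hS).
by rewrite /Jacobi; apply: (rowfinW h); rewrite add0n addn0.
Qed.

Lemma mvmul_lowinv_P x m : mvmul Sinv (P x) m = x ^+ m.
Proof.
by rewrite (@mvmul_fin _ Sinv _ 0 m.+1 m (rowfin_lowinv hS)) ?addn0 // chi_exp.
Qed.

Lemma JP x n : mvmul J (P x) n = x * P x n.
Proof.
rewrite /Jacobi (mvmul_mmul _ _ (rowfin_mmul (proj1 hS) rowfin_shift) (rowfin_lowinv hS)).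
have -> : mvmul Sinv (P x) = chi x by apply: funext => m; rewrite mvmul_lowinv_P.
rewrite (mvmul_mmul _ _ (proj1 hS) rowfin_shift).
have -> : mvmul (@shiftm R) (chi x) = (fun j => x * chi x j).
  apply: funext => j; rewrite (@mvmul_fin _ _ _ 1 j.+2 j rowfin_shift) ?addn1 //.
  rewrite /shiftm; under eq_bigr => k _ do rewrite eq_sym.
  by rewrite sum_delta // /chi exprS.
by rewrite (mvmulZ _ _ _ (proj1 hS)).
Qed.

Local Notation Pi := (Pimx S).

Lemma rowfin_pascal : rowfin (@pascal R) 0.
Proof. by move=> n m; rewrite addn0 /pascal => /bin_small ->. Qed.

Lemma lunit_Pi : lunit Pi.
Proof.
have h1 := rowfin_mmul (proj1 hS) rowfin_pascal.
have h := rowfin_mmul h1 (rowfin_lowinv hS).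
split; first by rewrite /Pimx; exact: h.
move=> n; rewrite /Pimx (mmul_diagn _ h1 (rowfin_lowinv hS)).
rewrite (mmul_diagn _ (proj1 hS) rowfin_pascal) hSdiag /pascal binn.
by rewrite !mul1r; apply: lowinv_diag; exact: hS.
Qed.

Lemma PiP x n : mvmul Pi (P x) n = P (x + 1) n.
Proof.
have h1 := rowfin_mmul (proj1 hS) rowfin_pascal.
rewrite /Pimx (mvmul_mmul _ _ h1 (rowfin_lowinv hS)).
have -> : mvmul Sinv (P x) = chi x by apply: funext => m; rewrite mvmul_lowinv_P.
rewrite (mvmul_mmul _ _ (proj1 hS) rowfin_pascal).
have -> : mvmul (@pascal R) (chi x) = chi (x + 1).
  apply: funext => j; rewrite (@mvmul_fin _ _ _ 0 j.+1 j rowfin_pascal) ?addn0 //.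
  rewrite /chi exprD1n; apply: eq_bigr => k _.
  by rewrite /pascal mulr_natl.
by [].
Qed.

Local Notation Piinv := (lowinv Pi).

Lemma PiinvP x n : mvmul Piinv (P x) n = P (x - 1) n.
Proof.
have -> : P x = mvmul Pi (P (x - 1)).
  by apply: funext => m; rewrite PiP subrK.
rewrite -(mvmul_mmul _ _ (rowfin_lowinv lunit_Pi) (proj1 lunit_Pi)).
by apply: mvmul_eqidm => i j; apply: mmul_lowinv_l; exact: lunit_Pi.
Qed.


Variable w : nat -> K.
Variable Hd : nat -> K.
Hypothesis hsum : forall n : nat, cvgn (series (fun k : nat => (k%:R ^+ n * `|w k|) : K)).
Hypothesis hminors : forall N : nat,
     \det (\matrix_(i < N, j < N) momentmx w i j) != 0.
Hypothesis hG : momentmx w = mmul (mmul (lowinv S) (Hmx Hd)) (mtr (lowinv S)).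

Lemma summ_pow m : summ (fun i => (i%:R : K) ^+ m * w i).
Proof.
have h1 : forall k, (0 <= k)%N -> `|(1 : K)| <= 1 by move=> k _; rewrite normr1.
have := @base_cvg R w hsum m (fun _ => 1) 0 h1.
have -> // : (fun k => (k%:R : K) ^+ m * w k * 1) = (fun k => (k%:R : K) ^+ m * w k).
by apply: funext => k; rewrite mulr1.
Qed.

Lemma rowfin_SH : rowfin (mmul Sinv (Hmx Hd)) 0.
Proof.
move=> n m nm; rewrite mmul_diag (rowfin_lowinv hS) ?mul0r //.
Qed.

Lemma moment_fin j m N : (j < N)%N ->
  moment w (j + m) = \sum_(l < N) Sinv j l * Hd l * Sinv m l.
Proof.
move=> hj; have := congr1 (fun G => G j m) hG; rewrite /momentmx /= => ->.
rewrite (@mmul_fin _ _ (mtr Sinv) 0 N j m rowfin_SH) ?addn0 //.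
by apply: eq_bigr => l _; rewrite mmul_diag.
Qed.

Lemma O1 k D (c : nat -> K) :
  csum (fun i => P i%:R k * (\sum_(m < D) c m * (i%:R)^+m) * w i) =
  Hd k * \sum_(m < D) c m * Sinv m k.
Proof.
set N := (maxn k D).+1.
have hkN : (k < N)%N by rewrite ltnS leq_maxl.
have e : (fun i => P i%:R k * (\sum_(m < D) c m * (i%:R)^+m) * w i) =
    (fun i => \sum_(j < k.+1) S k j *
       (\sum_(m < D) c m * ((i%:R : K) ^+ (j + m) * w i))).
  apply: funext => i; rewrite (Pvec_fin _ (ltnSn k)) !mulr_suml.
  apply: eq_bigr => j _; rewrite mulr_sumr mulr_suml mulr_sumr; apply: eq_bigr => m _.
  by rewrite exprD; ring.
rewrite e.
have hin j : summ (fun i => \sum_(m < D) c m * ((i%:R : K) ^+ (j + m) * w i)).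
  by apply: (proj1 (@csum_lin R D c (fun m i => (i%:R : K) ^+ (j + m) * w i) _)) => m _; exact: summ_pow.
rewrite (proj2 (@csum_lin R k.+1 (S k) _ (fun j _ => hin j))).
under eq_bigr => j _ do rewrite (proj2 (@csum_lin R D c (fun m i => (i%:R : K) ^+ (j + m)%N * w i) (fun m _ => @summ_pow (j + m)%N))).
transitivity (\sum_(j < N) S k j * \sum_(m < D) c m * moment w (j + m)).
  symmetry; apply: (@sum_trunc R (fun j => S k j * \sum_(m < D) c m * moment w (j + m))).
    by rewrite ltnS leq_maxl.
  by move=> j hj _; rewrite hSlow ?mul0r.
under eq_bigr => j _ do under eq_bigr => m _ do rewrite (@moment_fin j m N (ltn_ord j)).
transitivity (\sum_(m < D) c m * \sum_(l < N) (\sum_(j < N) S k j * Sinv j l) * Hd l * Sinv m l).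
transitivity (\sum_(j < N) \sum_(m < D) \sum_(l < N) S k j * c m * Sinv j l * Hd l * Sinv m l).
    apply: eq_bigr => j _; rewrite mulr_sumr; apply: eq_bigr => m _.
    rewrite mulr_sumr mulr_sumr; apply: eq_bigr => l _; ring.
  rewrite exchange_big /=; apply: eq_bigr => m _.
  rewrite mulr_sumr; under [RHS]eq_bigr => l _ do rewrite !mulr_suml mulr_sumr.
  rewrite [RHS]exchange_big /=; apply: eq_bigr => j _; apply: eq_bigr => l _; ring.
under eq_bigr => m _ do under eq_bigr => l _ do rewrite (@lowinv_r _ S (maxn k D) k l hS hkN (ltn_ord l)).
rewrite mulr_sumr; apply: eq_bigr => m _.
under eq_bigr => l _ do rewrite -mulrA.
by rewrite (@sum_delta _ (fun l => Hd l * Sinv m l) k N hkN); ring.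
Qed.



Lemma O1p k (q : {poly K}) :
  csum (fun i => P i%:R k * q.[i%:R] * w i) = Hd k * \sum_(m < size q) q`_m * Sinv m k.
Proof.
rewrite -O1; congr csum; apply: funext => i; by rewrite horner_coef.
Qed.

Lemma O1z k (q : {poly K}) : (size q <= k)%N ->
  csum (fun i => P i%:R k * q.[i%:R] * w i) = 0.
Proof.
move=> hq; rewrite O1p big1 ?mulr0 // => m _.
rewrite (rowfin_lowinv hS) ?mulr0 // addn0; exact: leq_trans (ltn_ord m) hq.
Qed.

Lemma O2 k j : csum (fun i => P i%:R k * P i%:R j * w i) = (k == j)%:R * Hd k.
Proof.
have -> : (fun i => P i%:R k * P i%:R j * w i) =
    (fun i => P i%:R k * (\sum_(m < j.+1) S j m * (i%:R)^+m) * w i).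
  by apply: funext => i; rewrite (Pvec_fin _ (ltnSn j)).
rewrite O1; set N := maxn j k.
rewrite -(@sum_trunc _ (fun m => S j m * Sinv m k) j.+1 N.+1); last 2 first.
- by rewrite ltnS leq_maxl.
- by move=> m hm _; rewrite hSlow ?mul0r.
rewrite (@lowinv_r _ S N j k hS) ?ltnS ?leq_maxl ?leq_maxr // eq_sym; ring.
Qed.

Lemma Hd_neq0 k : Hd k != 0.
Proof.
set N := k.+1.
pose M : 'M[K]_N := trunc N Sinv.
pose d : 'rV[K]_N := \row_i Hd i.
have eG : \matrix_(i < N, j < N) momentmx w i j = M *m diag_mx d *m M^T.
  apply/matrixP => i j; rewrite !mxE /momentmx (@moment_fin i j N (ltn_ord i)).
  apply: eq_bigr => l _; rewrite mul_mx_diag !mxE; done.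
have dM : \det M = 1.
  rewrite /M det_trig.
    by rewrite big1 // => i _; rewrite mxE lowinv_diag //; exact: hS.
  by apply/is_trig_mxP => i j ij; rewrite mxE (rowfin_lowinv hS) // addn0.
have := hminors N; rewrite eG !det_mulmx det_tr dM mul1r mulr1 det_diag.
rewrite big_ord_recr /= mxE; apply: contra => /eqP ->; by rewrite mulr0.
Qed.


Variables theta sigma : {poly K}.
Hypothesis hpearson : forall k : nat,
     theta.[k.+1%:R] * w k.+1 = sigma.[k%:R] * w k.
Hypothesis htheta0 : theta.[0] = 0.

Local Notation Th := (mhorner theta J).
Local Notation T := (mmul Piinv Th).

Lemma rowfin_T : rowfin T (size theta).
Proof.
have := rowfin_mmul (rowfin_lowinv lunit_Pi) (@rowfin_mhorner _ theta _ rowfin_J).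
by rewrite add0n.
Qed.

Lemma TP x n : mvmul T (P x) n = theta.[x] * P (x - 1) n.
Proof.
rewrite (mvmul_mmul _ _ (rowfin_lowinv lunit_Pi) (@rowfin_mhorner _ theta _ rowfin_J)).
have -> : mvmul Th (P x) = (fun k => theta.[x] * P x k).
  by apply: funext => k; apply: eigen_mhorner; [exact: rowfin_J | exact: JP].
by rewrite (mvmulZ _ _ _ (rowfin_lowinv lunit_Pi)) PiinvP.
Qed.

Lemma PsiE k n : Psi S Hd theta k n = T k n * Hd n.
Proof. by rewrite /Psi /Hmx mmul_diag. Qed.

Lemma natS (i : nat) : (i.+1%:R : K) = i%:R + 1.
Proof. by rewrite mulrSr. Qed.

Lemma summ_PP l n : summ (fun i => P i%:R l * P i%:R n * w i).
Proof.
have := @poly_cvg1 R w hsum (pP l * pP n).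
have -> // : (fun i => (pP l * pP n).[i%:R] * w i) = (fun i => P i%:R l * P i%:R n * w i).
by apply: funext => i; rewrite hornerM !pPE.
Qed.

Definition fpol n : {poly K} := sigma * (pP n \Po ('X + 1)).

Lemma fpolE n x : (fpol n).[x] = sigma.[x] * P (x + 1) n.
Proof. by rewrite /fpol hornerM horner_comp hornerD hornerX hornerC pPE. Qed.

Lemma key k n : Psi S Hd theta k n = csum (fun i => P i%:R k * (fpol n).[i%:R] * w i).
Proof.
rewrite PsiE; set N := (k + size theta + n).+1.
have hkN : (k + size theta < N)%N by rewrite ltnS leq_addr.
have hnN : (n < N)%N by rewrite ltnS leq_addl.
have E1 : T k n * Hd n = csum (fun i => theta.[i%:R] * P (i%:R - 1) k * P i%:R n * w i).
  have -> : (fun i => theta.[i%:R] * P (i%:R - 1) k * P i%:R n * w i) =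
      (fun i => \sum_(l < N) T k l * (P i%:R l * P i%:R n * w i)).
    apply: funext => i; rewrite -TP (@mvmul_fin _ T _ (size theta) N k rowfin_T hkN).
    rewrite !mulr_suml; apply: eq_bigr => l _; ring.
  rewrite (proj2 (@csum_lin R N (T k) _ (fun l _ => @summ_PP l n))).
  under eq_bigr => l _ do rewrite O2.
  under eq_bigr => l _ do rewrite mulrA.
  by rewrite -(@sum_delta' _ (fun l => T k l * Hd l) n N hnN); apply: eq_bigr => l _; rewrite mulrAC.
rewrite E1.
set u := (fun i => theta.[i%:R] * P (i%:R - 1) k * P i%:R n * w i).
have eS : (fun i => u i.+1) = (fun i => P i%:R k * (fpol n).[i%:R] * w i).
  apply: funext => i; rewrite /u natS addrK fpolE.
  have hp := hpearson i; rewrite natS in hp.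
  move: (P i%:R k) (P (i%:R + 1) n) (theta.[i%:R + 1]) (w i.+1) (sigma.[i%:R]) (w i) hp.
  move=> a b t1 w1 s0 w0 hp.
  transitivity (a * b * (t1 * w1)); first by ring.
  by rewrite hp; ring.
have hS' : summ (fun i => u i.+1).
  rewrite eS; have := @poly_cvg1 R w hsum (pP k * fpol n).
  have -> // : (fun i => (pP k * fpol n).[i%:R] * w i) = (fun i => P i%:R k * (fpol n).[i%:R] * w i).
  by apply: funext => i; rewrite hornerM pPE.
have [_ ->] := @summ_shift R u hS'.
by rewrite eS {1}/u mulr0n htheta0 !mul0r add0r.
Qed.


Lemma Q_summ k c : summ (fun i => P i%:R k * w i / (c - i%:R)).
Proof.
have := @poly_cvgz R w hsum (pP k) c.
have -> // : (fun i => (pP k).[i%:R] * w i / (c - i%:R)) = (fun i => P i%:R k * w i / (c - i%:R)).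
by apply: funext => i; rewrite pPE.
Qed.

Lemma mt_first n z :
  theta.[z] * Qvec w S z n
  - mvmul (mmul (mtr (Psi S Hd theta)) (Hinvmx Hd)) (Qvec w S (z - 1)) n
  = csum (fun k => P k%:R n * ((theta.[z] - theta.[k%:R]) / (z - k%:R)) * w k).
Proof.
set f := fpol n; set D := (size f).+1.
have hcoef k : Psi S Hd theta k n * (Hd k)^-1 = \sum_(m < D) f`_m * Sinv m k.
  rewrite key O1p mulrC mulKf ?Hd_neq0 //.
  rewrite (@sum_trunc _ (fun m => f`_m * Sinv m k) (size f) D) //.
  by move=> m hm _; rewrite nth_default ?mul0r.
have hz k : (D <= k)%N -> Psi S Hd theta k n = 0.
  by move=> hk; rewrite key O1z // ltnW.
set v := fun j : nat => theta.[j%:R] * P j%:R n * w j / (z - j%:R).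
have pv i : v i.+1 = f.[i%:R] * w i / (z - 1 - i%:R).
  rewrite /v natS fpolE.
  have -> : z - (i%:R + 1) = z - 1 - i%:R by ring.
  have hp := hpearson i; rewrite natS in hp.
  move: (P (i%:R + 1) n) (theta.[i%:R + 1]) (w i.+1) (sigma.[i%:R]) (w i) ((z - 1 - i%:R)^-1) hp.
  move=> a t1 w1 s0 w0 ci hp.
  transitivity (a * ci * (t1 * w1)); first by ring.
  by rewrite hp; ring.
have hv' : summ (fun i => v i.+1).
  have -> : (fun i => v i.+1) = (fun i => f.[i%:R] * w i / (z - 1 - i%:R)).
    by apply: funext => i; rewrite pv.
  exact: (@poly_cvgz R w hsum f (z - 1)).
have Ev : mvmul (mmul (mtr (Psi S Hd theta)) (Hinvmx Hd)) (Qvec w S (z - 1)) n =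
    csum (fun i => v i.+1).
  rewrite /mvmul (proj2 (@csum_fin R (fun k => mmul (mtr (Psi S Hd theta)) (Hinvmx Hd) n k * Qvec w S (z - 1) k) D _)); last first.
    by move=> k hk; rewrite /Hinvmx mmul_diag /mtr hz ?mul0r.
  under eq_bigr => k _ do rewrite /Hinvmx mmul_diag /mtr hcoef.
  have E2 : \sum_(k < D) (\sum_(m < D) f`_m * Sinv m k) * Qvec w S (z - 1) k =
      csum (fun i => \sum_(k < D) (\sum_(m < D) f`_m * Sinv m k) * (P i%:R k * w i / (z - 1 - i%:R))).
    exact: (esym (proj2 (@csum_lin R D (fun k => \sum_(m < D) f`_m * Sinv m k)
              (fun k i => P i%:R k * w i / (z - 1 - i%:R)) (fun k _ => @Q_summ k (z - 1))))).
  rewrite E2; congr csum; apply: funext => i.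
  rewrite pv.
  transitivity (\sum_(m < D) f`_m * (\sum_(k < D) Sinv m k * P i%:R k) * (w i / (z - 1 - i%:R))).
    under eq_bigr => k _ do rewrite mulr_suml.
    rewrite exchange_big /=; apply: eq_bigr => m _; rewrite mulr_sumr mulr_suml.
    by apply: eq_bigr => k _; rewrite !mulrA.
  under eq_bigr => m _ do rewrite (@chi_exp i%:R m (size f) (ltn_ord m)).
  rewrite -mulr_suml -mulrA; congr (_ * _).
  rewrite horner_coef (@sum_trunc _ (fun m => f`_m * (i%:R) ^+ m) (size f) D) //.
  by move=> m hm _; rewrite nth_default ?mul0r.
have [_ Esh] := @summ_shift R v hv'.
have v0 : v 0%N = 0 by rewrite /v mulr0n htheta0 !mul0r.
rewrite Ev -[csum (fun i => v i.+1)]add0r -v0 -Esh.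
have hQ := @Q_summ n z.
have hv : summ v by have [] := @summ_shift R v hv'.
rewrite /Qvec -(proj2 (@summZ R theta.[z] _ hQ)).
rewrite -(@csumB R _ _ (proj1 (@summZ R theta.[z] _ hQ)) hv).
congr csum; apply: funext => i; rewrite /v.
move: (P i%:R n) (w i) ((z - i%:R)^-1) (theta.[z]) (theta.[i%:R]) => a b ci tz ti.
ring.
Qed.


Lemma mt_second n z :
  sigma.[z] * Qvec w S z n
  - mvmul (mmul (Psi S Hd theta) (Hinvmx Hd)) (Qvec w S (z + 1)) n
  = csum (fun k => P k%:R n * ((sigma.[z] - sigma.[k%:R]) / (z - k%:R)) * w k).
Proof.
have eT : mmul (Psi S Hd theta) (Hinvmx Hd) = T.
  apply: funext => k; apply: funext => m.
  by rewrite /Hinvmx mmul_diag PsiE mulfK ?Hd_neq0.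
rewrite eT.
set N := (n + size theta).+1.
set u := fun i : nat => theta.[i%:R] * P (i%:R - 1) n * w i / (z + 1 - i%:R).
have pu i : u i.+1 = (sigma * pP n).[i%:R] * w i / (z - i%:R).
  rewrite /u natS addrK hornerM pPE.
  have -> : z + 1 - (i%:R + 1) = z - i%:R by ring.
  have hp := hpearson i; rewrite natS in hp.
  move: (P i%:R n) (theta.[i%:R + 1]) (w i.+1) (sigma.[i%:R]) (w i) ((z - i%:R)^-1) hp.
  move=> a t1 w1 s0 w0 ci hp.
  transitivity (a * ci * (t1 * w1)); first by ring.
  by rewrite hp; ring.
have hu' : summ (fun i => u i.+1).
  have -> : (fun i => u i.+1) = (fun i => (sigma * pP n).[i%:R] * w i / (z - i%:R)).
    by apply: funext => i; rewrite pu.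
  exact: (@poly_cvgz R w hsum (sigma * pP n) z).
have Eu : mvmul T (Qvec w S (z + 1)) n = csum u.
  rewrite (@mvmul_fin _ T _ (size theta) N n rowfin_T) ?ltnSn //.
  have E2 : \sum_(k < N) T n k * Qvec w S (z + 1) k =
      csum (fun i => \sum_(k < N) T n k * (P i%:R k * w i / (z + 1 - i%:R))).
    exact: (esym (proj2 (@csum_lin R N (T n)
              (fun k i => P i%:R k * w i / (z + 1 - i%:R)) (fun k _ => @Q_summ k (z + 1))))).
  rewrite E2; congr csum; apply: funext => i.
  transitivity ((\sum_(k < N) T n k * P i%:R k) * (w i / (z + 1 - i%:R))).
    by rewrite mulr_suml; apply: eq_bigr => k _; rewrite !mulrA.
  rewrite -(@mvmul_fin _ T _ (size theta) N n rowfin_T) ?ltnSn // TP.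
  by rewrite /u !mulrA.
have [_ Esh] := @summ_shift R u hu'.
have u0 : u 0%N = 0 by rewrite /u mulr0n htheta0 !mul0r.
rewrite Eu Esh u0 add0r.
have hQ := @Q_summ n z.
rewrite /Qvec -(proj2 (@summZ R sigma.[z] _ hQ)).
rewrite -(@csumB R _ _ (proj1 (@summZ R sigma.[z] _ hQ)) hu').
congr csum; apply: funext => i; rewrite pu hornerM pPE.
move: (P i%:R n) (w i) ((z - i%:R)^-1) (sigma.[z]) (sigma.[i%:R]) => a b ci tz ti.
ring.
Qed.

End Str.


Theorem mainTheorem7 (R : realType) (w : nat -> C R)
  (theta sigma : {poly C R}) (S : mx R) (Hd : nat -> C R)
  (* finite absolute moments: sum_k k^n |w(k)| < oo *)
  (hsum : forall n : nat, cvgn (series (fun k : nat => (k%:R ^+ n * `|w k|) : C R)))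
  (* all leading principal minors of the moment matrix are nonzero *)
  (hminors : forall N : nat,
     \det (\matrix_(i < N, j < N) momentmx w i j) != 0)
  (* G = S^{-1} H S^{-T}, S lower unitriangular, H = diag(H_0, H_1, ...) *)
  (hSdiag : forall n : nat, S n n = 1)
  (hSlow : forall n m : nat, (n < m)%N -> S n m = 0)
  (hG : momentmx w = mmul (mmul (lowinv S) (Hmx Hd)) (mtr (lowinv S)))
  (* discrete Pearson equation, theta(0) = 0 *)
  (hpearson : forall k : nat,
     theta.[k.+1%:R] * w k.+1 = sigma.[k%:R] * w k)
  (htheta0 : theta.[0] = 0) :
  forall z : C R, (forall k : int, z != k%:~R) ->
  (forall n : nat,
     theta.[z] * Qvec w S z n
     - mvmul (mmul (mtr (Psi S Hd theta)) (Hinvmx Hd)) (Qvec w S (z - 1)) n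
     = csum (fun k : nat =>
         Pvec S k%:R n * ((theta.[z] - theta.[k%:R]) / (z - k%:R)) * w k))
  /\
  (forall n : nat,
     sigma.[z] * Qvec w S z n
     - mvmul (mmul (Psi S Hd theta) (Hinvmx Hd)) (Qvec w S (z + 1)) n
     = csum (fun k : nat =>
         Pvec S k%:R n * ((sigma.[z] - sigma.[k%:R]) / (z - k%:R)) * w k)).
Proof.
move=> z _; split=> n.
- exact: (mt_first hSdiag hSlow hsum hminors hG hpearson htheta0).
- exact: (mt_second hSdiag hSlow hsum hminors hG hpearson htheta0).
Qed.
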